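(* Let $\ell,m,n\in\mathbb{N}$, $\mathbf{p}_1,\dots,\mathbf{p}_m\in\mathrm{Prob}(n)$ and $\mathbf{s}\in\mathrm{Prob}(\ell)$. Then $$H\Big(\bigvee_{x\in[m]}(\mathbf{p}_x\otimes\mathbf{s})\Big)\le\log\ell+H\Big(\bigvee_{x\in[m]}\mathbf{p}_x\Big),$$ where $H$ is the Shannon entropy.
   Context: $H(\mathbf{p})=-\sum_i p_i\log p_i$. For $\mathbf{p},\mathbf{q}\in\mathrm{Prob}(N)$, $\mathbf{p}\succ\mathbf{q}$ means the sum of the $k$ largest entries of $\mathbf{p}$ is at least that of $\mathbf{q}$ for all $k$. For a finite set $\{\mathbf{a}_x\}\subset\mathrm{Prob}(N)$, $\bigvee_x\mathbf{a}_x$ denotes its optimal upper bound: the unique $\mathbf{q}\in\mathrm{Prob}^{\downarrow}(N)$ (non-increasing entries) with $\mathbf{q}\succ\mathbf{a}_x$ for all $x$ such that every $\mathbf{p}\in\mathrm{Prob}(N)$ with $\mathbf{p}\succ\mathbf{a}_x$ for all $x$ satisfies $\mathbf{p}\succ\mathbf{q}$. *)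

(* Defs.v *)
From HB Require Import structures.
From mathcomp Require Import all_boot all_order all_algebra.
From mathcomp Require Import reals exp.
Set Implicit Arguments. Unset Strict Implicit. Unset Printing Implicit Defensive.
Import Order.TTheory GRing.Theory Num.Theory.
Local Open Scope ring_scope.

Section Majorization.
Variable R : realType.

Definition Prob (N : nat) (p : 'rV[R]_N) : Prop :=
  (forall i, 0 <= p 0 i) /\ \sum_(i < N) p 0 i = 1.

Definition Prob_dec (N : nat) (p : 'rV[R]_N) : Prop :=
  Prob p /\ (forall i j : 'I_N, (i <= j)%N -> p 0 j <= p 0 i).

Definition sum_largest (N : nat) (p : 'rV[R]_N) (k : nat) : R :=
  \sum_(x <- take k (sort (fun a b : R => b <= a) [seq p 0 i | i : 'I_N])) x.

Definition majorizes (N : nat) (p q : 'rV[R]_N) : Prop :=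
  forall k : nat, sum_largest q k <= sum_largest p k.

Definition is_opt_upper_bound (m N : nat) (a : 'I_m -> 'rV[R]_N)
    (q : 'rV[R]_N) : Prop :=
  [/\ Prob_dec q,
      (forall x, majorizes q (a x)) &
      (forall p : 'rV[R]_N, Prob p -> (forall x, majorizes p (a x)) ->
         majorizes p q)].

(* Shannon entropy (natural log; ln 0 = 0 in mathcomp-analysis, so 0 ln 0 = 0) *)
Definition entropy (N : nat) (p : 'rV[R]_N) : R :=
  - \sum_(i < N) p 0 i * ln (p 0 i).

Definition tensor (n l : nat) (p : 'rV[R]_n) (s : 'rV[R]_l) : 'rV[R]_(n * l) :=
  mxvec (\matrix_(i < n, j < l) (p 0 i * s 0 j)).

End Majorization.

(* Main.v *)
Require Import Defs.
From HB Require Import structures.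
From mathcomp Require Import all_boot all_order all_algebra.
From mathcomp Require Import reals exp lra ring.
Import Order.TTheory GRing.Theory Num.Theory.
Local Open Scope ring_scope.

Lemma ge_total {R : realType} : total (fun a b : R => b <= a).
Proof. by move=> a b; rewrite le_total. Qed.
Lemma ge_trans {R : realType} : transitive (fun a b : R => b <= a).
Proof. by move=> y x z hyx hzy; exact: le_trans hzy hyx. Qed.
Lemma ge_anti {R : realType} : antisymmetric (fun a b : R => b <= a).
Proof. by move=> x y /andP[h1 h2]; apply/le_anti; rewrite h1 h2. Qed.
Lemma ge_refl {R : realType} : reflexive (fun a b : R => b <= a).
Proof. by move=> x; rewrite lexx. Qed.

Lemma sum_take_nth {R : realType} (s : seq R) k :
  \sum_(x <- take k s) x = \sum_(0 <= i < k) nth 0 s i.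
Proof.
elim: s k => [|x s IH] k.
  by rewrite big_nil big1 // => i _; rewrite nth_nil.
case: k => [|k]; first by rewrite take0 big_nil big_geq.
by rewrite /= big_cons big_nat_recl // IH.
Qed.

Lemma sum_const_size {R : realType} (r1 r2 : seq R) (c : R) :
  size r1 = size r2 -> \sum_(x <- r1) c = \sum_(x <- r2) c.
Proof.
elim: r1 r2 => [|x r1 IH] [|y r2] //= [h].
by rewrite !big_cons (IH r2).
Qed.

Lemma sum_take_sort {R : realType} (s : seq R) k :
  \sum_(x <- take k s) x <= \sum_(x <- take k (sort (fun a b : R => b <= a) s)) x.
Proof.
set y := sort _ s.
have py : perm_eq y s by rewrite perm_sort.
have sy : sorted (fun a b : R => b <= a) y by apply: sort_sorted; exact: ge_total.
have szy : size y = size s by rewrite size_sort.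
case: (leqP (size s) k) => hk.
  by rewrite !take_oversize ?szy // (perm_big _ py).
set c := nth 0 y k.
pose f x := Num.max (x - c) 0.
have sz1 : size (take k s) = size (take k y) by rewrite !size_take szy hk.
have h1 : \sum_(x <- take k s) x <= \sum_(x <- take k s) c + \sum_(x <- take k s) f x.
  rewrite -big_split /=; apply: ler_sum => x _.
  by rewrite -lerBlDl /f le_max lexx.
have h2 : \sum_(x <- take k s) f x <= \sum_(x <- y) f x.
  rewrite (perm_big _ py) -{2}(cat_take_drop k s) big_cat /= lerDl.
  by apply: sumr_ge0 => x _; rewrite /f le_max lexx orbT.
have h3 : \sum_(x <- y) f x = \sum_(x <- take k y) (x - c).
  rewrite -{1}(cat_take_drop k y) big_cat /=.
  have -> : \sum_(x <- drop k y) f x = 0.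
    rewrite big_seq big1 // => x /nthP => /(_ 0) [i hi <-].
    rewrite nth_drop /f; apply/max_idPr; rewrite subr_le0.
    rewrite size_drop in hi.
    apply: (sorted_leq_nth ge_trans ge_refl) => //=; rewrite ?szy //.
      by rewrite inE /= -ltn_subRL -szy.
    by rewrite leq_addr.
  rewrite addr0 big_seq [in RHS]big_seq; apply: eq_bigr => x /nthP => /(_ 0) [i hi <-].
  rewrite /f; apply/max_idPl; rewrite subr_ge0.
  rewrite size_take szy hk in hi.
  rewrite nth_take //.
  apply: (sorted_leq_nth ge_trans ge_refl) => //=; rewrite ?szy //.
    by rewrite inE; exact: ltn_trans hk.
  exact: ltnW.
have h4 : \sum_(x <- take k y) (x - c) = \sum_(x <- take k y) x - \sum_(x <- take k y) c.
  by rewrite big_split /= sumrN.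
rewrite (sum_const_size _ _ c sz1) in h1.
lra.
Qed.

Definition lst {R : realType} {N : nat} (v : 'rV[R]_N) : seq R := [seq v 0 i | i : 'I_N].
Definition vn {R : realType} {N : nat} (v : 'rV[R]_N) (i : nat) : R := nth 0 (lst v) i.

Lemma sum_largestE {R : realType} {N} (v : 'rV[R]_N) k :
  sum_largest v k = \sum_(x <- take k (sort (fun a b : R => b <= a) (lst v))) x.
Proof. by []. Qed.

Lemma lstE {R : realType} {N} (v : 'rV[R]_N) : lst v = map (v 0) (enum 'I_N).
Proof. by []. Qed.

Lemma size_lst {R : realType} {N} (v : 'rV[R]_N) : size (lst v) = N.
Proof. by rewrite lstE size_map size_enum_ord. Qed.

Lemma vnE {R : realType} {N} (v : 'rV[R]_N) (i : 'I_N) : vn v i = v 0 i.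
Proof. by rewrite /vn lstE (nth_map i) ?nth_ord_enum // size_enum_ord. Qed.

Lemma vn_out {R : realType} {N} (v : 'rV[R]_N) i : (N <= i)%N -> vn v i = 0.
Proof. by move=> h; rewrite /vn nth_default // size_lst. Qed.

Lemma vn_ge0 {R : realType} {N} (v : 'rV[R]_N) i : (forall j, 0 <= v 0 j) -> 0 <= vn v i.
Proof.
move=> h; case: (ltnP i N) => hi; last by rewrite vn_out.
by rewrite -[i]/(nat_of_ord (Ordinal hi)) vnE.
Qed.

Lemma sum_ord_vn {R : realType} {N} (v : 'rV[R]_N) :
  \sum_(i < N) v 0 i = \sum_(0 <= i < N) vn v i.
Proof. by rewrite big_mkord; apply: eq_bigr => i _; rewrite vnE. Qed.

Lemma sorted_lst {R : realType} {N} (v : 'rV[R]_N) :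
  (forall i j : 'I_N, (i <= j)%N -> v 0 j <= v 0 i) ->
  sorted (fun a b : R => b <= a) (lst v).
Proof.
move=> h; rewrite lstE sorted_map.
have : sorted (relpre val leq) (enum 'I_N) by rewrite -sorted_map val_enum_ord iota_sorted.
by apply: sub_sorted => i j /= hij; exact: h.
Qed.

Lemma sum_largest_sorted {R : realType} {N} (v : 'rV[R]_N) k :
  sorted (fun a b : R => b <= a) (lst v) ->
  sum_largest v k = \sum_(0 <= i < k) vn v i.
Proof. by move=> hs; rewrite sum_largestE sorted_sort ?sum_take_nth //; exact: ge_trans. Qed.

Lemma sum_largest_ge {R : realType} {N} (v : 'rV[R]_N) k :
  \sum_(0 <= i < k) vn v i <= sum_largest v k.
Proof. by rewrite sum_largestE -sum_take_nth; exact: sum_take_sort. Qed.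

Lemma vn_noninc {R : realType} {N} (v : 'rV[R]_N) i j :
  Prob_dec v -> (i <= j)%N -> vn v j <= vn v i.
Proof.
move=> [[h0 _] hd] hij.
case: (ltnP j N) => hj; last by rewrite vn_out ?vn_ge0.
have hs := sorted_lst v hd.
rewrite /vn; apply: (sorted_leq_nth ge_trans ge_refl) => //=; rewrite inE /= size_lst //.
exact: leq_ltn_trans hj.
Qed.

Lemma sum_lst {R : realType} {N} (v : 'rV[R]_N) :
  \sum_(x <- lst v) x = \sum_(i < N) v 0 i.
Proof. by rewrite -{1}(take_size (lst v)) sum_take_nth size_lst sum_ord_vn. Qed.

Lemma take_allpairs {R : realType} (y t : seq R) k :
  take (k * size t) [seq a * b | a <- y, b <- t] = [seq a * b | a <- take k y, b <- t].
Proof.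
elim: y k => [|x y IH] [|k] /=; rewrite ?mul0n ?take0 //.
by rewrite mulSn take_cat size_map ltnNge leq_addr /= addKn IH.
Qed.

Lemma sum_allpairs {R : realType} (y t : seq R) :
  \sum_(z <- [seq a * b | a <- y, b <- t]) z = (\sum_(a <- y) a) * (\sum_(b <- t) b).
Proof.
elim: y => [|x y IH]; first by rewrite /= !big_nil mul0r.
by rewrite /= big_cat big_map IH big_cons mulrDl; congr (_ + _); rewrite mulr_sumr.
Qed.

Lemma perm_tensor {R : realType} {n l} (p : 'rV[R]_n) (s : 'rV[R]_l) :
  perm_eq (lst (tensor p s)) [seq a * b | a <- lst p, b <- lst s].
Proof.
have hperm : perm_eq (enum 'I_(n * l)) [seq mxvec_index i j | i <- enum 'I_n, j <- enum 'I_l].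
  apply: uniq_perm; first exact: enum_uniq.
    apply: allpairs_uniq; try exact: enum_uniq.
    by move=> [i j] [i' j'] _ _ /= /cast_ord_inj /enum_rank_inj.
  move=> k; rewrite mem_enum; case/mxvec_indexP: k => i j.
  by apply/esym/allpairsP; exists (i, j); rewrite !mem_enum.
rewrite [lst (tensor _ _)]lstE; apply: perm_trans (perm_map _ hperm) _.
rewrite map_allpairs !lstE.
rewrite [X in perm_eq _ X]allpairs_mapl [X in perm_eq _ X]allpairs_mapr.
suff -> : [seq tensor p s 0 (mxvec_index x y) | x <- enum 'I_n, y <- enum 'I_l] =
  [seq p 0 x * s 0 y | x <- enum 'I_n, y <- enum 'I_l] by [].
by apply: eq_allpairs => i j; rewrite /tensor mxvecE mxE.
Qed.

Lemma sum_largest_tensor {R : realType} {n l} (p : 'rV[R]_n) (s : 'rV[R]_l) k :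
  Prob s -> sum_largest p k <= sum_largest (tensor p s) (k * l).
Proof.
move=> [_ hs1].
set sp := sort (fun a b : R => b <= a) (lst p).
have hperm : perm_eq (lst (tensor p s)) [seq a * b | a <- sp, b <- lst s].
  have h1 : perm_eq [seq a * b | a <- lst p, b <- lst s] [seq a * b | a <- sp, b <- lst s].
    by apply: perm_allpairs => //; rewrite perm_sym perm_sort.
  have h0 := perm_tensor p s.
  exact (perm_trans h0 h1).
rewrite (sum_largestE (tensor p s)) (perm_sortP ge_total ge_trans ge_anti _ _ hperm).
apply: le_trans (sum_take_sort _ _).
have -> : (k * l)%N = (k * size (lst s))%N by rewrite size_lst.
by rewrite take_allpairs sum_allpairs sum_lst hs1 mulr1 sum_largestE.
Qed.

Lemma sum_shift {R : realType} (f : nat -> R) a l :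
  \sum_(a <= k < a + l) f k = \sum_(0 <= t < l) f (a + t)%N.
Proof.
elim: l => [|l IH]; first by rewrite addn0 !big_geq.
by rewrite addnS !big_nat_recr //= ?IH // leq_addr.
Qed.

Lemma sum_blocks {R : realType} (f : nat -> R) l j :
  \sum_(0 <= i < j) \sum_(0 <= t < l) f (i * l + t)%N = \sum_(0 <= k < j * l) f k.
Proof.
elim: j => [|j IH]; first by rewrite !big_geq // mul0n.
rewrite big_nat_recr //= IH mulSnr (big_cat_nat (leq0n _) (leq_addr _ _)) /=.
congr (_ + _).
by rewrite [RHS]sum_shift.
Qed.

Lemma stepA {R : realType} m n l (p : 'I_m -> 'rV[R]_n) (s : 'rV[R]_l)
  (hs : Prob s) (a : 'rV[R]_(n * l)) (q : 'rV[R]_n)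
  (ha : is_opt_upper_bound (fun x => tensor (p x) s) a)
  (hq : is_opt_upper_bound p q) :
  forall j, \sum_(0 <= i < j) vn q i <= \sum_(0 <= k < j * l) vn a k.
Proof.
case: ha => [[[ha0 ha1] hadec] hamaj _].
case: hq => [[hqP hqdec] _ hquniv].
have aD : Prob_dec a by split.
have sa := sorted_lst a hadec.
pose r : 'rV[R]_n := \row_i \sum_(0 <= t < l) vn a (i * l + t)%N.
have rn : forall i, vn r i = \sum_(0 <= t < l) vn a (i * l + t)%N.
  move=> i; case: (ltnP i n) => hi.
    by rewrite -[i]/(nat_of_ord (Ordinal hi)) vnE mxE.
  rewrite vn_out // big1 // => t _; rewrite vn_out //.
  exact: leq_trans (leq_mul hi (leqnn l)) (leq_addr _ _).
have rdec : forall i j : 'I_n, (i <= j)%N -> r 0 j <= r 0 i.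
  move=> i j hij; rewrite !mxE; apply: ler_sum_nat => t _; apply: vn_noninc => //.
  by rewrite leq_add2r leq_mul2r hij orbT.
have rsum : forall j, \sum_(0 <= i < j) vn r i = \sum_(0 <= k < j * l) vn a k.
  move=> j; rewrite -sum_blocks; apply: eq_bigr => i _; exact: rn.
have rP : Prob r.
  split.
    by move=> i; rewrite mxE; apply: sumr_ge0 => t _; apply: vn_ge0.
  by rewrite sum_ord_vn rsum -sum_ord_vn.
have rmaj : forall x, majorizes r (p x).
  move=> x k; apply: le_trans (sum_largest_tensor (p x) s k hs) _.
  apply: le_trans (hamaj x (k * l)%N) _.
  by rewrite sum_largest_sorted // -rsum; apply: sum_largest_ge.
move=> j; have := hquniv r rP rmaj j.
by rewrite (sum_largest_sorted q j (sorted_lst q hqdec)) (sum_largest_sorted r j (sorted_lst r rdec)) rsum.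
Qed.

Lemma psum_full {R : realType} (f : nat -> R) M :
  (forall i, (M <= i)%N -> f i = 0) -> \sum_(0 <= i < M) f i = 1 ->
  forall k, (M <= k)%N -> \sum_(0 <= i < k) f i = 1.
Proof.
move=> hz hs k hk; rewrite (big_cat_nat (leq0n M) hk) /= hs big_nat_cond big1 ?addr0 //.
by move=> i /andP[/andP[hi _] _]; exact: hz.
Qed.

Lemma psum_mono {R : realType} (f : nat -> R) k K :
  (forall i, 0 <= f i) -> (k <= K)%N -> \sum_(0 <= i < k) f i <= \sum_(0 <= i < K) f i.
Proof.
move=> h0 hk; rewrite (big_cat_nat (leq0n k) hk) /= lerDl.
by apply: sumr_ge0 => i _.
Qed.

Lemma psum_le1 {R : realType} (f : nat -> R) M :
  (forall i, 0 <= f i) ->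
  (forall i, (M <= i)%N -> f i = 0) -> \sum_(0 <= i < M) f i = 1 ->
  forall k, \sum_(0 <= i < k) f i <= 1.
Proof.
move=> h0 hz hs k; case: (leqP k M) => hk.
  by rewrite -hs; apply: psum_mono.
by rewrite (psum_full f M hz hs k (ltnW hk)).
Qed.

Fixpoint dd {R : realType} (qn : nat -> R) (i : nat) : R :=
  match i with
  | 0 => - ln (qn 0%N)
  | i'.+1 => if 0 < qn i'.+1 then - ln (qn i'.+1) else dd qn i'
  end.

Lemma dd_pos {R : realType} (qn : nat -> R) i : 0 < qn i -> dd qn i = - ln (qn i).
Proof. by case: i => [|i] //= ->. Qed.

Lemma dd_mono {R : realType} (qn : nat -> R) :
  (forall i j, (i <= j)%N -> qn j <= qn i) ->
  forall i j, (i <= j)%N -> dd qn i <= dd qn j.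
Proof.
move=> hq i j; elim: j => [|j IH]; first by rewrite leqn0 => /eqP ->.
rewrite leq_eqVlt => /orP[/eqP -> //| hij].
apply: le_trans (IH hij) _.
rewrite /= ; case: ifP => hpos; last exact: lexx.
have hj : 0 < qn j by apply: lt_le_trans hpos (hq _ _ (leqnSn j)).
rewrite dd_pos // lerN2 ler_ln ?posrE //.
exact: hq (leqnSn j).
Qed.

Lemma abel {R : realType} (a w c : nat -> R) N :
  (forall i, c i <= c i.+1) ->
  (forall K, \sum_(0 <= i < K) w i <= \sum_(0 <= i < K) a i) ->
  \sum_(0 <= i < N) a i = \sum_(0 <= i < N) w i ->
  \sum_(0 <= i < N) a i * c i <= \sum_(0 <= i < N) w i * c i.
Proof.
move=> hc hw hN.
suff H : forall K, \sum_(0 <= i < K) (a i - w i) * c i <=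
     (\sum_(0 <= i < K) a i - \sum_(0 <= i < K) w i) * c K.
  have := H N; rewrite hN subrr mul0r.
  under eq_bigr do rewrite mulrBl.
  by rewrite sumrB subr_le0.
elim=> [|K IH]; first by rewrite !big_geq // subrr mul0r.
rewrite !big_nat_recr //=.
have hD : 0 <= \sum_(0 <= i < K) a i + a K - (\sum_(0 <= i < K) w i + w K).
  by rewrite subr_ge0 -!big_nat_recr //=; exact: hw.
have h2 : 0 <= (\sum_(0 <= i < K) a i + a K - (\sum_(0 <= i < K) w i + w K)) * (c K.+1 - c K).
  by apply: mulr_ge0 => //; rewrite subr_ge0.
set A := \sum_(0 <= i < K) a i in IH hD h2 *.
set W := \sum_(0 <= i < K) w i in IH hD h2 *.
set L := \sum_(0 <= i < K) (a i - w i) * c i in IH *.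
nra.
Qed.

Lemma stepB {R : realType} n l (an qn : nat -> R) :
  (0 < l)%N ->
  (forall i, 0 <= an i) -> (forall i j, (i <= j)%N -> an j <= an i) ->
  (forall i, (n * l <= i)%N -> an i = 0) -> \sum_(0 <= i < n * l) an i = 1 ->
  (forall i, 0 <= qn i) -> (forall i j, (i <= j)%N -> qn j <= qn i) ->
  (forall i, (n <= i)%N -> qn i = 0) -> \sum_(0 <= i < n) qn i = 1 ->
  (forall j, \sum_(0 <= i < j) qn i <= \sum_(0 <= k < j * l) an k) ->
  - \sum_(0 <= k < n * l) an k * ln (an k) <=
    ln (l%:R) - \sum_(0 <= i < n) qn i * ln (qn i).
Proof.
move=> l0 a0 adec az a1 q0 qdec qz q1 hA.
have lR : 0 < l%:R :> R by rewrite ltr0n.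
have hl0 : l%:R != 0 :> R by rewrite pnatr_eq0 -lt0n.
pose wn k := qn (k %/ l)%N / l%:R.
have w0 : forall k, 0 <= wn k by move=> k; rewrite /wn divr_ge0 // ltW.
have divE : forall j t, (t < l)%N -> ((j * l + t) %/ l = j)%N.
  by move=> j t ht; rewrite divnMDl // divn_small // addn0.
have blockgen : forall (h : nat -> R) j t0, (t0 <= l)%N ->
    \sum_(0 <= t < t0) wn (j * l + t)%N * h ((j * l + t) %/ l)%N = t0%:R * (qn j / l%:R) * h j.
  move=> h j t0 hle.
  rewrite (eq_big_nat _ _ (F2 := fun=> qn j / l%:R * h j)).
    by rewrite sumr_const_nat subn0 -[_ *+ t0]mulr_natl mulrA.
  by move=> t /andP[_ ht]; rewrite /wn divE //; exact: leq_trans ht hle.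
have blockw : forall j t0, (t0 <= l)%N ->
    \sum_(0 <= t < t0) wn (j * l + t)%N = t0%:R * (qn j / l%:R).
  move=> j t0 hle.
  rewrite (eq_big_nat _ _ (F2 := fun=> qn j / l%:R)).
    by rewrite sumr_const_nat subn0 -[_ *+ t0]mulr_natl.
  by move=> t /andP[_ ht]; rewrite /wn divE //; exact: leq_trans ht hle.
have lqK : forall x : R, l%:R * (x / l%:R) = x by move=> x; rewrite mulrC divfK.
have hW : forall j t, (t <= l)%N ->
    \sum_(0 <= k < j * l + t) wn k = \sum_(0 <= i < j) qn i + t%:R * (qn j / l%:R).
  move=> j t ht.
  rewrite (big_cat_nat (leq0n (j * l)) (leq_addr t _)) /= [X in _ + X]sum_shift blockw //.
  rewrite -(sum_blocks wn l j); congr (_ + _).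
  by apply: eq_bigr => i _; rewrite blockw // lqK.
have Wfull : \sum_(0 <= k < n * l) wn k = 1.
  by have := hW n 0%N (leq0n l); rewrite addn0 => ->; rewrite mul0r addr0.
have hF : forall j t, \sum_(0 <= k < j * l + t) an k =
    \sum_(0 <= k < j * l) an k + \sum_(0 <= t' < t) an (j * l + t')%N.
  by move=> j t; rewrite (big_cat_nat (leq0n (j * l)) (leq_addr t _)) /= [X in _ + X]sum_shift.
have hWF : forall k, \sum_(0 <= i < k) wn i <= \sum_(0 <= i < k) an i.
  move=> k; rewrite (divn_eq k l).
  set j := (k %/ l)%N; set t := (k %% l)%N.
  have ht : (t < l)%N by rewrite ltn_pmod.
  rewrite hW; last exact: ltnW.
  rewrite hF.
  have hAj := hA j; have hAj1 := hA j.+1.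
  rewrite big_nat_recr //= mulSnr hF in hAj1.
  set b := fun t' => an (j * l + t')%N.
  rewrite (big_cat_nat (leq0n t) (ltnW ht)) /= in hAj1.
  set X := \sum_(0 <= t' < t) an (j * l + t')%N in hAj1 *.
  set Y := \sum_(t <= t' < l) an (j * l + t')%N in hAj1.
  have hX : t%:R * an (j * l + t)%N <= X.
    rewrite mulr_natl.
    have -> : an (j * l + t)%N *+ t = \sum_(0 <= i < t) an (j * l + t)%N by rewrite sumr_const_nat subn0.
    apply: ler_sum_nat => t' /andP[_ h]; apply: adec.
    by rewrite leq_add2l ltnW.
  have hY : Y <= (l%:R - t%:R) * an (j * l + t)%N.
    rewrite -natrB; last exact: ltnW.
    rewrite mulr_natl -sumr_const_nat.
    apply: ler_sum_nat => t' /andP[h _]; apply: adec.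
    by rewrite leq_add2l.
  have t0 : 0 <= t%:R :> R by [].
  have tl : t%:R <= l%:R :> R by rewrite ler_nat; exact: ltnW.
  have b0 := a0 (j * l + t)%N.
  set B := an (j * l + t)%N in hX hY b0.
  set Fj := \sum_(0 <= k < j * l) an k in hAj hAj1 *.
  set Q := \sum_(0 <= i < j) qn i in hAj hAj1 *.
  set z := qn j / l%:R.
  have qlz : qn j = l%:R * z by rewrite lqK.
  rewrite qlz in hAj1.
  have h1 : 0 <= (l%:R - t%:R) * (Fj - Q) by apply: mulr_ge0; rewrite subr_ge0.
  have h2 : 0 <= (l%:R - t%:R) * (X - t%:R * B) by apply: mulr_ge0; rewrite subr_ge0.
  have h3 : 0 <= t%:R * ((l%:R - t%:R) * B - Y) by apply: mulr_ge0; rewrite ?subr_ge0.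
  have h4 : 0 <= t%:R * (Fj + (X + Y) - (Q + l%:R * z)) by apply: mulr_ge0; rewrite ?subr_ge0.
  suff : 0 <= l%:R * (Fj + X - (Q + t%:R * z)) by rewrite pmulr_rge0 // subr_ge0.
  have -> : l%:R * (Fj + X - (Q + t%:R * z)) =
    (l%:R - t%:R) * (Fj - Q) + (l%:R - t%:R) * (X - t%:R * B) +
    t%:R * ((l%:R - t%:R) * B - Y) + t%:R * (Fj + (X + Y) - (Q + l%:R * z)) by ring.
  by rewrite !addr_ge0.

have hsupp : forall k, 0 < an k -> 0 < qn (k %/ l)%N.
  move=> k hk; rewrite lt_neqAle q0 andbT; apply/eqP => hq0.
  set j := (k %/ l)%N in hq0.
  have hkN : (k < n * l)%N.
    by case: (ltnP k (n * l)) => // h; move: hk; rewrite az // ltxx.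
  have Qj : \sum_(0 <= i < j) qn i = 1.
    have h := psum_full qn n qz q1 (j + n) (leq_addl _ _).
    rewrite (big_cat_nat (leq0n j) (leq_addr n j)) /= in h.
    have z0 : \sum_(j <= i < j + n) qn i = 0.
      rewrite big_nat_cond big1 // => i /andP[/andP[hi _] _].
      apply/le_anti; rewrite q0 andbT hq0; exact: qdec.
    by rewrite z0 addr0 in h.
  have := hA j; rewrite Qj => hFj.
  have hk1 := psum_le1 an (n * l) a0 az a1 k.+1.
  have hjk : (j * l <= k)%N by exact: leq_trunc_div.
  rewrite (big_cat_nat (leq0n (j * l)) (leq_trans hjk (leqnSn k))) /= big_nat_recr //= in hk1.
  have : 0 <= \sum_(j * l <= i < k) an i by apply: sumr_ge0 => i _.
  move=> h; move: hk1 hFj h hk; set A := \sum_(0 <= i < j * l) an i; set B := \sum_(j * l <= i < k) an i.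
  move=> *; lra.
have hG : \sum_(0 <= k < n * l) an k * ln (wn k) - \sum_(0 <= k < n * l) an k * ln (an k) <= 0.
  rewrite -sumrB.
  suff H : \sum_(0 <= k < n * l) (an k * ln (wn k) - an k * ln (an k)) <= \sum_(0 <= k < n * l) (wn k - an k).
    by move: H; rewrite [X in _ <= X]sumrB Wfull a1 subrr.
  apply: ler_sum_nat => k _.
  case: (eqVneq (an k) 0) => [->|hne]; first by rewrite !mul0r subrr subr0.
  have hk : 0 < an k by rewrite lt_neqAle eq_sym hne a0.
  have hw : 0 < wn k by rewrite /wn divr_gt0 // hsupp.
  rewrite -mulrBr -ln_div ?posrE //.
  have hpos : -1 < wn k / an k - 1 by have := divr_gt0 hw hk; lra.
  have := le_ln1Dx hpos; rewrite addrC subrK => hle.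
  apply: le_trans (ler_wpM2l (ltW hk) hle) _.
  by rewrite mulrBr mulr1 [an k * _]mulrC divfK.
have hB4 : \sum_(0 <= k < n * l) an k * ln (wn k) =
    \sum_(0 <= k < n * l) an k * ln (qn (k %/ l)%N) - ln (l%:R).
  have e : ln (l%:R) = \sum_(0 <= k < n * l) an k * ln (l%:R) :> R by rewrite -mulr_suml a1 mul1r.
  rewrite e -sumrB; apply: eq_bigr => k _.
  case: (eqVneq (an k) 0) => [->|hne]; first by rewrite !mul0r subrr.
  have hk : 0 < an k by rewrite lt_neqAle eq_sym hne a0.
  by rewrite /wn ln_div ?posrE ?hsupp // mulrBr.
pose c k := dd qn (k %/ l)%N.
have hc : forall i, c i <= c i.+1.
  by move=> i; apply: dd_mono => //; apply: leq_div2r.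
have hac : \sum_(0 <= k < n * l) an k * ln (qn (k %/ l)%N) = - \sum_(0 <= k < n * l) an k * c k.
  rewrite -sumrN; apply: eq_bigr => k _.
  case: (eqVneq (an k) 0) => [->|hne]; first by rewrite !mul0r oppr0.
  have hk : 0 < an k by rewrite lt_neqAle eq_sym hne a0.
  by rewrite /c dd_pos ?hsupp // mulrN opprK.
have hwc : \sum_(0 <= k < n * l) wn k * c k = - \sum_(0 <= i < n) qn i * ln (qn i).
  rewrite -(sum_blocks (fun k => wn k * c k) l n) -sumrN; apply: eq_bigr => i _.
  rewrite /c (blockgen (dd qn) i l (leqnn l)) lqK.
  case: (eqVneq (qn i) 0) => [->|hne]; first by rewrite !mul0r oppr0.
  have hq : 0 < qn i by rewrite lt_neqAle eq_sym hne q0.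
  by rewrite dd_pos // mulrN.
have hab := abel an wn c (n * l) hc hWF (etrans a1 (esym Wfull)).
rewrite hB4 hac in hG; rewrite hwc in hab.
lra.
Qed.

Lemma entropy_vn {R : realType} {N} (v : 'rV[R]_N) :
  entropy v = - \sum_(0 <= k < N) vn v k * ln (vn v k).
Proof. by rewrite /entropy big_mkord; congr (- _); apply: eq_bigr => i _; rewrite vnE. Qed.

Lemma Prob_pos {R : realType} {N} (v : 'rV[R]_N) : Prob v -> (0 < N)%N.
Proof.
case: N v => [|N] v [_ h] //.
by move: h; rewrite big_ord0 => /eqP; rewrite eq_sym oner_eq0.
Qed.

Theorem mainTheorem18 (R : realType) (l m n : nat)
    (p : 'I_m -> 'rV[R]_n) (s : 'rV[R]_l)
    (hp : forall x, Prob (p x)) (hs : Prob s)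
    (qps : 'rV[R]_(n * l)) (qp : 'rV[R]_n)
    (hqps : is_opt_upper_bound (fun x => tensor (p x) s) qps)
    (hqp : is_opt_upper_bound p qp) :
  entropy qps <= ln (l%:R) + entropy qp.
Proof.
have l0 : (0 < l)%N := Prob_pos s hs.
have hA := stepA _ _ _ _ _ hs _ _ hqps hqp.
case: hqps => [[[ha0 ha1] hadec] _ _].
case: hqp => [[[hq0 hq1] hqdec] _ _].
have aD : Prob_dec qps by split.
have qD : Prob_dec qp by split.
rewrite !entropy_vn addrC -[_ + ln _]addrC.
apply: (stepB _ _ _ _ l0 (fun i => vn_ge0 qps i ha0) (fun i j => vn_noninc qps i j aD) (vn_out qps)
  _ (fun i => vn_ge0 qp i hq0) (fun i j => vn_noninc qp i j qD) (vn_out qp) _ hA).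
- by rewrite -sum_ord_vn.
- by rewrite -sum_ord_vn.
Qed.
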